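(* In the setting of the context, assume $G''(p_1)<0$, $G''(p_2)\ge0$ and $G''(p_1)G'(p_2)e^{-K_1}<G''(p_2)G'(p_1)e^{K_1}$, and that $\ell\in(0,\min\{L,1-L\})$ is chosen so that $$(L-\ell)G''(p_1)e^{-K_1}+\big[(1-L-\ell)G''(p_2)+2\ell K_2\big]e^{K_1}<0.$$ Then $I_{\theta_0+c}(1)<0<I_{\theta_0-c}(1)$ for all sufficiently small $c>0$.
   Context: Let $G\in\mathrm{C}^2(\mathbb{R})$ be coercive ($G(p)\to\infty$ as $p\to\pm\infty$), $p_1<p_2$ with $G'(p_1)<0<G'(p_2)$, $L=\frac{G'(p_2)}{G'(p_2)-G'(p_1)}$, $K_1=\max\{|G'(p)|:\,p\in[p_1,p_2]\}$, $K_2=\max\{|G''(p)|:\,p\in[p_1,p_2]\}$. Given $\ell$, let $f$ be a $1$-periodic function in $\mathrm{C}^1(\mathbb{R})$ with $f'$ Lipschitz, $p_1\le f\le p_2$, $f=p_1$ on $[0,L-\ell]$, $f=p_2$ on $[L,1-\ell]$, and $\int_0^1G'(f(x))dx=0$. Define the $1$-periodic Lipschitz potential $V(x)=-f'(x)-G(f(x))$ and $\theta_0=\int_0^1f(x)dx$. For each $\theta\in\mathbb{R}$, $f_\theta\in\mathrm{C}^1(\mathbb{R})$ denotes the unique $1$-periodic function with $\int_0^1f_\theta=\theta$ and $f_\theta'+G(f_\theta)+V=\overline{H}(\theta)$ on $\mathbb{R}$ for some (unique) constant $\overline{H}(\theta)$; and $I_\theta(1)=\int_0^1G'(f_\theta(x))dx$.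 *)

(* Defs.v *)
From Stdlib Require Import Reals Lra.
From Coquelicot Require Import Coquelicot.
Open Scope R_scope.

Definition D1 (G : R -> R) : R -> R := Derive G.
Definition D2 (G : R -> R) : R -> R := Derive (Derive G).

Definition is_C2 (G : R -> R) : Prop :=
  (forall x, ex_derive G x) /\
  (forall x, ex_derive (Derive G) x) /\
  (forall x, continuous (Derive (Derive G)) x).

Definition is_C1 (f : R -> R) : Prop :=
  (forall x, ex_derive f x) /\ (forall x, continuous (Derive f) x).

Definition periodic1 (f : R -> R) : Prop := forall x, f (x + 1) = f x.

Definition lipschitz (h : R -> R) : Prop :=
  exists M, forall x y, Rabs (h x - h y) <= M * Rabs (x - y).

Definition coercive (G : R -> R) : Prop :=
  filterlim G (Rbar_locally p_infty) (Rbar_locally p_infty) /\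
  filterlim G (Rbar_locally m_infty) (Rbar_locally p_infty).

Definition is_max_on (h : R -> R) (a b K : R) : Prop :=
  (forall p, a <= p <= b -> h p <= K) /\ (exists p, a <= p <= b /\ h p = K).

Definition Lconst (G : R -> R) (p1 p2 : R) : R :=
  D1 G p2 / (D1 G p2 - D1 G p1).

Definition Vpot (G f : R -> R) : R -> R := fun x => - Derive f x - G (f x).

(* g is (the) 1-periodic C^1 cell solution f_theta:
   int_0^1 g = theta and g' + G(g) + V = Hbar(theta) for some constant. *)
Definition cell_sol (G V : R -> R) (theta : R) (g : R -> R) : Prop :=
  periodic1 g /\ is_C1 g /\ RInt g 0 1 = theta /\
  exists H : R, forall x, Derive g x + G (g x) + V x = H.

Definition I1 (G g : R -> R) : R := RInt (fun x => D1 G (g x)) 0 1.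

(* Main.v *)
Require Import Defs.
From Stdlib Require Import Reals Lra Psatz ZArith Classical.
From Coquelicot Require Import Coquelicot.
Open Scope R_scope.


Lemma cpt_of_derive (h : R -> R) x l : is_derive h x l -> continuity_pt h x.
Proof.
  intro H. apply continuity_pt_filterlim.
  apply (ex_derive_continuous (K:=R_AbsRing) (V:=R_NormedModule)). exists l; exact H.
Qed.

Lemma cont_of_derive (h : R -> R) x l : is_derive h x l -> continuous h x.
Proof.
  intro H. apply (ex_derive_continuous (K:=R_AbsRing) (V:=R_NormedModule)). exists l; exact H.
Qed.

Lemma mvt_abs (h dh : R -> R) a b K :
  (forall z, Rmin a b <= z <= Rmax a b -> is_derive h z (dh z)) ->
  (forall z, Rmin a b <= z <= Rmax a b -> Rabs (dh z) <= K) ->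
  Rabs (h b - h a) <= K * Rabs (b - a).
Proof.
  intros Hd Hb.
  destruct (MVT_gen h a b dh) as [c [Hc E]].
  - intros x Hx. apply Hd. lra.
  - intros x Hx. apply (cpt_of_derive h x (dh x)). apply Hd. exact Hx.
  - rewrite E, Rabs_mult. apply Rmult_le_compat_r. apply Rabs_pos. apply Hb. exact Hc.
Qed.

Lemma mvt_le (h dh : R -> R) a b K : a <= b ->
  (forall z, a <= z <= b -> is_derive h z (dh z)) ->
  (forall z, a <= z <= b -> dh z <= K) ->
  h b - h a <= K * (b - a).
Proof.
  intros Hab Hd Hb.
  destruct (MVT_gen h a b dh) as [c [Hc E]].
  - intros x Hx. apply Hd. rewrite Rmin_left, Rmax_right in Hx by lra. lra.
  - intros x Hx. apply (cpt_of_derive h x (dh x)). apply Hd.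
    rewrite Rmin_left, Rmax_right in Hx by lra. lra.
  - rewrite E. rewrite Rmin_left, Rmax_right in Hc by lra.
    apply Rmult_le_compat_r. lra. apply Hb. exact Hc.
Qed.

Lemma mvt_ge (h dh : R -> R) a b K : a <= b ->
  (forall z, a <= z <= b -> is_derive h z (dh z)) ->
  (forall z, a <= z <= b -> K <= dh z) ->
  K * (b - a) <= h b - h a.
Proof.
  intros Hab Hd Hb.
  destruct (MVT_gen h a b dh) as [c [Hc E]].
  - intros x Hx. apply Hd. rewrite Rmin_left, Rmax_right in Hx by lra. lra.
  - intros x Hx. apply (cpt_of_derive h x (dh x)). apply Hd.
    rewrite Rmin_left, Rmax_right in Hx by lra. lra.
  - rewrite E. rewrite Rmin_left, Rmax_right in Hc by lra.
    apply Rmult_le_compat_r. lra. apply Hb. exact Hc.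
Qed.

Lemma lip_compact (h : R -> R) :
  (forall x, is_derive h x (Derive h x)) ->
  (forall x, continuity_pt (Derive h) x) ->
  forall A B, exists M, 0 <= M /\ forall x y, A <= x <= B -> A <= y <= B ->
    Rabs (h y - h x) <= M * Rabs (y - x).
Proof.
  intros Hd Hc A B.
  destruct (Rle_dec A B) as [HAB|HAB].
  - destruct (continuity_ab_maj (fun z => Rabs (Derive h z)) A B HAB) as [m [Hm Hm']].
    { intros z _. apply (continuity_pt_comp (Derive h) Rabs). apply Hc. apply Rcontinuity_abs. }
    exists (Rabs (Derive h m)). split. apply Rabs_pos.
    intros x y Hx Hy. apply (mvt_abs h (Derive h)).
    + intros; apply Hd.
    + intros z Hz. apply Hm. split.
      * apply Rle_trans with (Rmin x y). apply Rmin_glb; lra. lra.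
      * apply Rle_trans with (Rmax x y). lra. apply Rmax_lub; lra.
  - exists 0. split. lra. intros. lra.
Qed.

Lemma per_nat (h : R -> R) : periodic1 h -> forall n x, h (x + INR n) = h x.
Proof.
  intros Hp n. induction n as [|n IH]; intro x.
  - simpl. f_equal. lra.
  - rewrite S_INR. replace (x + (INR n + 1)) with ((x + INR n) + 1) by ring.
    rewrite Hp. apply IH.
Qed.

Lemma per_Z (h : R -> R) : periodic1 h -> forall k x, h (x + IZR k) = h x.
Proof.
  intros Hp k x. destruct k as [|p|p].
  - f_equal. simpl. lra.
  - replace (IZR (Z.pos p)) with (INR (Pos.to_nat p)).
    apply per_nat; auto. rewrite INR_IZR_INZ. f_equal. apply positive_nat_Z.
  - replace (IZR (Z.neg p)) with (- INR (Pos.to_nat p)).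
    rewrite <- (per_nat h Hp (Pos.to_nat p) (x + - INR (Pos.to_nat p))). f_equal. ring.
    rewrite INR_IZR_INZ, positive_nat_Z. rewrite <- opp_IZR. reflexivity.
Qed.

Lemma per_red (h : R -> R) : periodic1 h -> forall t x, exists y, t <= y <= t + 1 /\ h x = h y.
Proof.
  intros Hp t x. destruct (base_Int_part (x - t)) as [H1 H2].
  exists (x - IZR (Int_part (x - t))). split. lra.
  rewrite <- (per_Z h Hp (Int_part (x - t)) (x - IZR (Int_part (x - t)))). f_equal. ring.
Qed.

Lemma is_derive_Reals_pt (h : R -> R) x l : is_derive h x l -> derivable_pt h x.
Proof. intro H. exists l. apply is_derive_Reals. exact H. Qed.

Lemma deriv_zero_min (h : R -> R) c l : is_derive h c l -> (forall x, h c <= h x) -> l = 0.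
Proof.
  intros Hd Hm.
  pose proof (deriv_minimum h (c-1) (c+1) c (is_derive_Reals_pt h c l Hd)) as D.
  rewrite <- D; try lra. symmetry. apply derive_pt_eq_0. apply is_derive_Reals. exact Hd.
  intros; apply Hm.
Qed.

Lemma deriv_zero_max (h : R -> R) c l : is_derive h c l -> (forall x, h x <= h c) -> l = 0.
Proof.
  intros Hd Hm.
  assert (-l = 0). apply (deriv_zero_min (fun x => - h x) c). 
  apply (is_derive_opp h c l) in Hd. exact Hd.
  intros x; specialize (Hm x); lra. lra.
Qed.

Lemma cpt_eps (h : R -> R) x : continuity_pt h x -> forall eps, 0 < eps ->
  exists d, 0 < d /\ forall y, Rabs (y - x) < d -> Rabs (h y - h x) < eps.
Proof.
  intros Hc eps He. destruct (Hc eps He) as [d [Hd H]].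
  exists d. split. lra. intros y Hy.
  destruct (Req_dec y x) as [->|Hne]. rewrite Rminus_eq_0, Rabs_R0. lra.
  apply (H y). split. split. exact I. auto. exact Hy.
Qed.

Lemma first_hit (h : R -> R) x0 x2 : (forall x, continuity_pt h x) ->
  x0 < x2 -> 0 < h x0 -> h x2 <= 0 ->
  exists s, x0 < s <= x2 /\ h s = 0 /\ forall x, x0 <= x < s -> 0 < h x.
Proof.
  intros Hc Hlt H0 H2.
  set (E := fun x => x0 <= x <= x2 /\ forall y, x0 <= y <= x -> 0 < h y).
  assert (Hb : bound E). { exists x2. intros x [Hx _]. lra. }
  assert (Hn : exists x, E x). { exists x0. split. lra. intros y Hy. replace y with x0 by lra. exact H0. }
  destruct (completeness E Hb Hn) as [s [Hub Hlub]].
  assert (Hs0 : x0 <= s). { apply Hub. split. lra. intros y Hy. replace y with x0 by lra. exact H0. }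
  assert (Hs2 : s <= x2). { apply Hlub. intros x [Hx _]. lra. }
  assert (Hbelow : forall x, x0 <= x < s -> 0 < h x).
  { intros x Hx. destruct (classic (exists z, E z /\ x < z)) as [[z [[Hz1 Hz2] Hz3]]|Hno].
    - apply Hz2. lra.
    - exfalso. assert (s <= x). apply Hlub. intros z Hz. destruct (Rle_dec z x). auto.
      exfalso. apply Hno. exists z. split. auto. lra. lra. }
  assert (Hhs : h s = 0).
  { destruct (Rtotal_order (h s) 0) as [Hneg|[Hz|Hpos]]; auto; exfalso.
    - destruct (cpt_eps h s (Hc s) (- h s)) as [d [Hd Hd']]. lra.
      assert (x0 < s). { destruct (Req_dec x0 s). subst. lra. lra. }
      set (x := Rmax x0 (s - d/2)).
      assert (0 < h x). apply Hbelow. unfold x. split. apply Rmax_l. apply Rmax_lub_lt; lra.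
      assert (Rabs (x - s) < d). unfold x. apply Rabs_def1. assert (Hm := Rmax_lub_lt x0 (s - d/2) s). 
      assert (x0 <= Rmax x0 (s - d/2)) by apply Rmax_l. assert (s - d/2 <= Rmax x0 (s-d/2)) by apply Rmax_r. lra.
      assert (x0 <= Rmax x0 (s - d/2)) by apply Rmax_l. assert (s - d/2 <= Rmax x0 (s-d/2)) by apply Rmax_r. lra.
      specialize (Hd' x H3). apply Rabs_def2 in Hd'. lra.
    - destruct (cpt_eps h s (Hc s) (h s)) as [d [Hd Hd']]. lra.
      assert (s < x2). { destruct (Req_dec s x2). subst. lra. lra. }
      set (x := Rmin x2 (s + d/2)).
      assert (Hmx1 : Rmin x2 (s + d/2) <= x2) by apply Rmin_l.
      assert (Hmx2 : Rmin x2 (s + d/2) <= s + d/2) by apply Rmin_r.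
      assert (Hmx3 : s < Rmin x2 (s + d/2)) by (apply Rmin_glb_lt; lra).
      assert (E x). { split. unfold x; lra. intros y Hy.
        destruct (Rlt_le_dec y s). apply Hbelow; lra.
        assert (Rabs (y - s) < d). apply Rabs_def1; unfold x in Hy; lra.
        specialize (Hd' y H1). apply Rabs_def2 in Hd'. lra. }
      specialize (Hub x H1). unfold x in Hub. lra. }
  exists s. split; [|split]; auto.
  destruct (Req_dec x0 s). subst. lra. lra.
Qed.

Lemma last_hit (h : R -> R) x2 x0 : (forall x, continuity_pt h x) ->
  x2 < x0 -> 0 < h x0 -> h x2 <= 0 ->
  exists s, x2 <= s < x0 /\ h s = 0 /\ forall x, s < x <= x0 -> 0 < h x.
Proof.
  intros Hc Hlt H0 H2.
  destruct (first_hit (fun x => h (- x)) (-x0) (-x2)) as [s [Hs1 [Hs2 Hs3]]].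
  - intro x. apply (continuity_pt_comp (fun x => - x) h). apply continuity_pt_opp, derivable_continuous_pt, derivable_pt_id. apply Hc.
  - lra.
  - rewrite Ropp_involutive. auto.
  - rewrite Ropp_involutive. auto.
  - exists (- s). split. lra. split. auto. intros x Hx. 
    replace x with (- - x) by ring. apply Hs3. lra.
Qed.

Lemma deriv_sign_left (h : R -> R) s l x0 : is_derive h s l -> h s = 0 -> x0 < s ->
  (forall x, x0 <= x < s -> 0 < h x) -> l <= 0.
Proof.
  intros Hd Hs Hx0 Hpos. apply is_derive_Reals in Hd.
  destruct (Rle_dec l 0) as [|Hl]; auto. exfalso.
  destruct (Hd l) as [del Hdel]. lra.
  set (hh := - Rmin (del/2) (s - x0)).
  assert (H1 : 0 < Rmin (del/2) (s - x0)). { apply Rmin_glb_lt. destruct del; simpl; lra. lra. }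
  assert (H2 : Rmin (del/2) (s - x0) <= del/2) by apply Rmin_l.
  assert (H3 : Rmin (del/2) (s - x0) <= s - x0) by apply Rmin_r.
  assert (hh <> 0) by (unfold hh; lra).
  assert (Rabs hh < del). { unfold hh. rewrite Rabs_Ropp, Rabs_right by lra. destruct del; simpl in *; lra. }
  specialize (Hdel hh H H0). rewrite Hs in Hdel.
  assert (0 < h (s + hh)) by (apply Hpos; unfold hh; lra).
  set (q := (h (s + hh) - 0) / hh) in *.
  assert (q * hh = h (s + hh) - 0) by (unfold q; field; auto).
  apply Rabs_def2 in Hdel. assert (hh < 0) by (unfold hh; lra). clearbody q hh. destruct Hdel. nra.
Qed.

Lemma deriv_sign_right (h : R -> R) s l x0 : is_derive h s l -> h s = 0 -> s < x0 ->
  (forall x, s < x <= x0 -> 0 < h x) -> 0 <= l.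
Proof.
  intros Hd Hs Hx0 Hpos. apply is_derive_Reals in Hd.
  destruct (Rle_dec 0 l) as [|Hl]; auto. exfalso.
  destruct (Hd (-l)) as [del Hdel]. lra.
  set (hh := Rmin (del/2) (x0 - s)).
  assert (H1 : 0 < Rmin (del/2) (x0 - s)). { apply Rmin_glb_lt. destruct del; simpl; lra. lra. }
  assert (H2 : Rmin (del/2) (x0 - s) <= del/2) by apply Rmin_l.
  assert (H3 : Rmin (del/2) (x0 - s) <= x0 - s) by apply Rmin_r.
  assert (hh <> 0) by (unfold hh; lra).
  assert (Rabs hh < del). { unfold hh. rewrite Rabs_right by lra. destruct del; simpl in *; lra. }
  specialize (Hdel hh H H0). rewrite Hs in Hdel.
  assert (0 < h (s + hh)) by (apply Hpos; unfold hh; lra).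
  set (q := (h (s + hh) - 0) / hh) in *.
  assert (q * hh = h (s + hh) - 0) by (unfold q; field; auto).
  apply Rabs_def2 in Hdel. assert (0 < hh) by (unfold hh; lra). clearbody q hh. destruct Hdel. nra.
Qed.

Lemma gronwall (e q : R -> R) z B :
  (forall x, z <= x <= z + 1 -> is_derive e x (- q x)) ->
  (forall x, z <= x <= z + 1 -> Rabs (q x) <= B * Rabs (e x)) ->
  e z = 0 -> forall x, z <= x <= z + 1 -> e x = 0.
Proof.
  intros Hd Hb Hz x Hx.
  set (phi := fun t => exp (-2 * B * t) * (e t * e t)).
  assert (Hphi : forall t, z <= t <= z + 1 -> is_derive phi t
     (exp (-2 * B * t) * (-2 * B * (e t * e t) - 2 * (e t * q t)))).
  { intros t Ht. unfold phi. specialize (Hd t Ht).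
    auto_derive.
    - repeat split; exists (- q t); exact Hd.
    - replace (Derive (fun x0 => e x0) t) with (- q t). ring. symmetry. apply is_derive_unique. exact Hd. }
  assert (Hle : phi x - phi z <= 0 * (x - z)).
    { apply (mvt_le phi (fun t => exp (-2 * B * t) * (-2 * B * (e t * e t) - 2 * (e t * q t))) z x 0). lra. intros t Ht. apply Hphi. lra.
    intros t Ht. assert (Ht' : z <= t <= z + 1) by lra.
    specialize (Hb t Ht'). 
    assert (Rabs (e t * q t) <= B * (e t * e t)).
    { rewrite Rabs_mult.
      assert (0 <= Rabs (e t)) by apply Rabs_pos.
      assert (e t * e t = Rabs (e t) * Rabs (e t)) by (rewrite <- Rabs_mult; rewrite Rabs_right; [auto| nra]).
      rewrite H0. nra. }
    pose proof (Rle_abs (- (e t * q t))) as Hab. rewrite Rabs_Ropp in Hab. 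
    assert (0 < exp (-2 * B * t)) by apply exp_pos. nra. }
  assert (phi z = 0) by (unfold phi; rewrite Hz; ring).
  assert (0 < exp (-2 * B * x)) by apply exp_pos.
  unfold phi in *. assert (e x * e x = 0) by nra. nra.
Qed.

Lemma RInt_le_const (h : R -> R) a b K : a <= b -> (forall x, a <= x <= b -> continuous h x) ->
  (forall x, a <= x <= b -> h x <= K) -> RInt h a b <= K * (b - a).
Proof.
  intros Hab Hc Hb.
  apply Rle_trans with (RInt (fun _ => K) a b).
  apply RInt_le; auto. apply (ex_RInt_continuous (V:=R_CompleteNormedModule)). intros z Hz. apply Hc.
  rewrite Rmin_left, Rmax_right in Hz; lra.
  apply (ex_RInt_const (V:=R_CompleteNormedModule)). intros; apply Hb; lra.
  rewrite RInt_const. unfold scal; simpl; unfold mult; simpl. lra.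
Qed.

Lemma RInt_ge_const (h : R -> R) a b K : a <= b -> (forall x, a <= x <= b -> continuous h x) ->
  (forall x, a <= x <= b -> K <= h x) -> K * (b - a) <= RInt h a b.
Proof.
  intros Hab Hc Hb.
  apply Rle_trans with (RInt (fun _ => K) a b).
  rewrite RInt_const. unfold scal; simpl; unfold mult; simpl. lra.
  apply RInt_le; auto. 
  apply (ex_RInt_const (V:=R_CompleteNormedModule)). apply (ex_RInt_continuous (V:=R_CompleteNormedModule)). intros z Hz. apply Hc.
  rewrite Rmin_left, Rmax_right in Hz; lra.
  intros; apply Hb; lra.
Qed.

Lemma positivity (e q : R -> R) Hc : periodic1 e ->
  (forall x, is_derive e x (Hc - q x)) ->
  (forall a b, exists B, forall x, a <= x <= b -> Rabs (q x) <= B * Rabs (e x)) ->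
  0 < RInt e 0 1 -> forall x, 0 < e x.
Proof.
  intros Hp Hd HB Hint.
  assert (Hcp : forall x, continuity_pt e x) by (intro x; apply (cpt_of_derive e x _ (Hd x))).
  destruct (continuity_ab_maj e 0 1) as [xM [HM HM01]]. lra. intros; auto.
  assert (HMg : forall y, e y <= e xM).
  { intro y. destruct (per_red e Hp 0 y) as [y' [Hy' E]]. rewrite E. apply HM. lra. }
  assert (HMpos : 0 < e xM).
  { destruct (Rlt_le_dec 0 (e xM)) as [|Hn]; auto. exfalso.
    assert (RInt e 0 1 <= 0 * (1 - 0)). apply RInt_le_const. lra.
    intros x _. apply (cont_of_derive e x _ (Hd x)).
    intros x Hx. specialize (HM x Hx). lra. lra. }
  assert (Hq0 : forall s, e s = 0 -> q s = 0).
  { intros s Hs. destruct (HB s s) as [B HBs]. specialize (HBs s). rewrite Hs, Rabs_R0 in HBs.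
    assert (Rabs (q s) <= 0) by (rewrite Rmult_0_r in HBs; apply HBs; lra).
    pose proof (Rabs_pos (q s)). apply Rabs_eq_0. lra. }
  intro x. destruct (Rlt_le_dec 0 (e x)) as [|Hx]; auto. exfalso.
  destruct (Rtotal_order Hc 0) as [Hneg|[Hz|Hpos]].
  - destruct (per_red e Hp (x + 1) xM) as [y [Hy E]].
    destruct (last_hit e x y Hcp) as [s [Hs1 [Hs2 Hs3]]]. lra. rewrite <- E; auto. auto.
    pose proof (deriv_sign_right e s _ y (Hd s) Hs2) as D.
    rewrite (Hq0 s Hs2) in D. assert (0 <= Hc - 0). apply D; auto. lra. lra.
  - destruct (per_red e Hp (x - 2) xM) as [y [Hy E]].
    destruct (first_hit e y x Hcp) as [s [Hs1 [Hs2 Hs3]]]. lra. rewrite <- E; auto. auto.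
    destruct (HB s (s + 1)) as [B HBs].
    assert (Z : forall t, s <= t <= s + 1 -> e t = 0).
    { apply (gronwall e q s B). intros t Ht. replace (- q t) with (Hc - q t) by lra. apply Hd.
      auto. auto. }
    destruct (per_red e Hp s xM) as [y' [Hy' E']].
    rewrite E', Z in HMpos; auto. lra.
  - destruct (per_red e Hp (x - 2) xM) as [y [Hy E]].
    destruct (first_hit e y x Hcp) as [s [Hs1 [Hs2 Hs3]]]. lra. rewrite <- E; auto. auto.
    pose proof (deriv_sign_left e s _ y (Hd s) Hs2) as D.
    rewrite (Hq0 s Hs2) in D. assert (Hc - 0 <= 0). apply D; auto. lra. lra.
Qed.

Lemma is_derive_ln_comp (e : R -> R) t d : is_derive e t d -> 0 < e t ->
  is_derive (fun t => ln (e t)) t (d / e t).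
Proof.
  intros Hd Hp. auto_derive.
  - repeat split; auto. exists d; exact Hd.
  - replace (Derive (fun x => e x) t) with d. field. lra. symmetry. apply is_derive_unique. exact Hd.
Qed.

Lemma harnack (e q : R -> R) Hc M : (forall x, 0 < e x) -> periodic1 e ->
  (forall x, is_derive e x (Hc - q x)) ->
  (forall x, 0 <= x <= 1 -> Rabs (q x) <= M * e x) ->
  forall x, 0 <= x <= 1 -> e x <= exp (2 * M) * RInt e 0 1.
Proof.
  intros Hpos Hp Hd Hq x Hx.
  assert (Hcp : forall x, continuity_pt e x) by (intro y; apply (cpt_of_derive e y _ (Hd y))).
  destruct (continuity_ab_min e 0 1) as [xm [Hm Hm01]]. lra. intros; auto.
  assert (Hmg : forall y, e xm <= e y).
  { intro y. destruct (per_red e Hp 0 y) as [y' [Hy' E]]. rewrite E. apply Hm. lra. }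
  assert (HH : Hc - q xm = 0) by (apply (deriv_zero_min e xm); auto).
  assert (Hint : e xm * (1 - 0) <= RInt e 0 1).
  { apply RInt_ge_const. lra. intros y _. apply (cont_of_derive e y _ (Hd y)). intros; auto. }
  assert (HM0 : 0 <= M).
  { specialize (Hq xm Hm01). pose proof (Rabs_pos (q xm)). pose proof (Hpos xm). nra. }
  assert (Hln : Rabs (ln (e x) - ln (e xm)) <= 2 * M * Rabs (x - xm)).
  { apply (mvt_abs (fun t => ln (e t)) (fun t => (Hc - q t) / e t)).
    - intros z _. apply is_derive_ln_comp; auto.
    - intros z Hz. assert (Hz01 : 0 <= z <= 1).
      { split. apply Rle_trans with (Rmin xm x). apply Rmin_glb; lra. lra.
        apply Rle_trans with (Rmax xm x). lra. apply Rmax_lub; lra. }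
      pose proof (Hpos z). unfold Rdiv. rewrite Rabs_mult, Rabs_inv, (Rabs_right (e z)) by lra.
      assert (A : Rabs (Hc - q z) <= 2 * M * e z).
      { replace (Hc - q z) with (q xm - q z) by lra.
        apply Rle_trans with (Rabs (q xm) + Rabs (q z)).
        unfold Rminus. rewrite <- (Rabs_Ropp (q z)). apply Rabs_triang.
        pose proof (Hq xm Hm01). pose proof (Hq z Hz01). specialize (Hmg z). nra. }
      apply Rmult_le_reg_r with (e z). auto. rewrite Rmult_assoc, Rinv_l, Rmult_1_r by lra. lra. }
  assert (Rabs (x - xm) <= 1) by (apply Rabs_le; lra).
  assert (ln (e x) <= ln (e xm) + 2 * M).
  { pose proof (Rle_abs (ln (e x) - ln (e xm))). nra. }
  assert (He : exp (ln (e x)) <= exp (ln (e xm) + 2 * M)).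
  { destruct H0 as [H0|H0]; [left; apply exp_increasing; auto | right; rewrite H0; auto]. }
  rewrite exp_ln in He by auto. rewrite exp_plus, exp_ln in He by auto.
  pose proof (exp_pos (2 * M)). nra.
Qed.

Lemma exp_le (a b : R) : a <= b -> exp a <= exp b.
Proof. intro H; destruct H as [H|H]; [left; apply exp_increasing; auto | right; rewrite H; auto]. Qed.

Lemma log_est (e q F Fd : R -> R) Hc K1 d : (forall x, 0 < e x) -> e 1 = e 0 ->
  (forall x, is_derive e x (Hc - q x)) -> (forall x, is_derive F x (Fd x)) ->
  F 0 = 0 -> F 1 = 0 -> (forall x, 0 <= x <= 1 -> Rabs (Fd x) <= K1) ->
  (forall x, 0 <= x <= 1 -> Rabs (q x / e x - Fd x) <= d) ->
  forall x, 0 <= x <= 1 -> Rabs (ln (e x) - ln (e 0)) <= K1 + d.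
Proof.
  intros Hpos Hper Hd HF HF0 HF1 HK Hq x Hx.
  set (k := fun t => ln (e t) + F t).
  set (dk := fun t => (Hc - q t) / e t + Fd t).
  assert (Hk : forall t, is_derive k t (dk t)).
  { intro t. unfold k, dk. apply (is_derive_plus (fun t => ln (e t)) F).
    apply is_derive_ln_comp; auto. apply HF. }
  assert (Hd0 : 0 <= d) by (specialize (Hq 0); pose proof (Rabs_pos (q 0 / e 0 - Fd 0)); assert (0 <= 0 <= 1) by lra; specialize (Hq H0); lra).
  assert (Hk10 : k 1 = k 0) by (unfold k; rewrite Hper, HF0, HF1; ring).
  assert (Hdk : forall t, 0 <= t <= 1 -> dk t = Hc / e t - (q t / e t - Fd t)).
  { intros t _. unfold dk. specialize (Hpos t). field. lra. }
  assert (Hkb : Rabs (k x - k 0) <= d).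
  { destruct (Rle_dec 0 Hc) as [HcP|HcN].
    - assert (A : forall t, 0 <= t <= 1 -> - d <= dk t).
      { intros t Ht. rewrite Hdk by auto. specialize (Hq t Ht). apply Rabs_le_between in Hq.
        assert (0 <= Hc / e t) by (apply Rdiv_le_0_compat; auto; apply Hpos). lra. }
      pose proof (mvt_ge k dk 0 x (- d) ltac:(lra) (fun z _ => Hk z) (fun z Hz => A z ltac:(lra))).
      pose proof (mvt_ge k dk x 1 (- d) ltac:(lra) (fun z _ => Hk z) (fun z Hz => A z ltac:(lra))).
      apply Rabs_le. nra.
    - assert (A : forall t, 0 <= t <= 1 -> dk t <= d).
      { intros t Ht. rewrite Hdk by auto. specialize (Hq t Ht). apply Rabs_le_between in Hq.
        assert (Hc / e t <= 0). { unfold Rdiv. pose proof (Rinv_0_lt_compat _ (Hpos t)). nra. } lra. }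
      pose proof (mvt_le k dk 0 x d ltac:(lra) (fun z _ => Hk z) (fun z Hz => A z ltac:(lra))).
      pose proof (mvt_le k dk x 1 d ltac:(lra) (fun z _ => Hk z) (fun z Hz => A z ltac:(lra))).
      apply Rabs_le. nra. }
  assert (HFx : Rabs (F x - F 0) <= K1 * Rabs (x - 0)).
  { apply (mvt_abs F Fd). intros; apply HF. intros z Hz. apply HK.
    rewrite Rmin_left, Rmax_right in Hz; lra. }
  rewrite HF0, Rminus_0_r, Rminus_0_r in HFx.
  assert (HK0 : 0 <= K1) by (assert (0 <= 0 <= 1) by lra; specialize (HK 0 H); pose proof (Rabs_pos (Fd 0)); lra).
  rewrite (Rabs_right x) in HFx by lra.
  unfold k in Hkb. rewrite HF0 in Hkb.
  replace (ln (e x) - ln (e 0)) with ((ln (e x) + F x - (ln (e 0) + 0)) - F x) by ring.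
  apply Rle_trans with (Rabs (ln (e x) + F x - (ln (e 0) + 0)) + Rabs (F x)).
  unfold Rminus at 1. rewrite <- (Rabs_Ropp (F x)). apply Rabs_triang.
  nra.
Qed.

Lemma taylor1 (G : R -> R) A B M2 : 0 <= M2 ->
  (forall x, is_derive G x (Derive G x)) ->
  (forall x y, A <= x <= B -> A <= y <= B -> Rabs (Derive G y - Derive G x) <= M2 * Rabs (y - x)) ->
  forall x y, A <= x <= B -> A <= y <= B ->
  Rabs (G y - G x - Derive G x * (y - x)) <= M2 * ((y - x) * (y - x)).
Proof.
  intros HM2 Hd HL x y Hx Hy.
  set (phi := fun z => G z - G x - Derive G x * (z - x)).
  assert (E : G y - G x - Derive G x * (y - x) = phi y - phi x) by (unfold phi; ring).
  rewrite E.
  assert (Hsq : Rabs (y - x) * Rabs (y - x) = (y - x) * (y - x)).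
  { rewrite <- Rabs_mult. apply Rabs_right. apply Rle_ge. apply Rle_0_sqr. }
  replace (M2 * ((y - x) * (y - x))) with ((M2 * Rabs (y - x)) * Rabs (y - x))
    by (rewrite Rmult_assoc, Hsq; ring).
  apply (mvt_abs phi (fun z => Derive G z - Derive G x)).
  - intros z _. unfold phi. auto_derive.
    + repeat split. exists (Derive G z). apply Hd.
    + replace (Derive (fun x0 => G x0) z) with (Derive G z) by reflexivity. ring.
  - intros z Hz. 
    assert (Hz' : A <= z <= B).
    { split. apply Rle_trans with (Rmin x y). apply Rmin_glb; lra. lra.
      apply Rle_trans with (Rmax x y). lra. apply Rmax_lub; lra. }
    apply Rle_trans with (M2 * Rabs (z - x)). apply HL; auto.
    apply Rmult_le_compat_l; auto. 
    destruct (Rle_dec x y).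
    + rewrite Rmin_left, Rmax_right in Hz by lra. rewrite !Rabs_right by lra. lra.
    + rewrite Rmin_right, Rmax_left in Hz by lra. rewrite !Rabs_left1 by lra. lra.
Qed.

Lemma int4 (w : R -> R) a1 a2 a3 b1 b2 b3 b4 : 0 <= a1 -> a1 <= a2 -> a2 <= a3 -> a3 <= 1 ->
  (forall x, continuous w x) ->
  (forall x, 0 <= x <= a1 -> w x <= b1) -> (forall x, a1 <= x <= a2 -> w x <= b2) ->
  (forall x, a2 <= x <= a3 -> w x <= b3) -> (forall x, a3 <= x <= 1 -> w x <= b4) ->
  RInt w 0 1 <= b1 * a1 + b2 * (a2 - a1) + b3 * (a3 - a2) + b4 * (1 - a3).
Proof.
  intros H1 H2 H3 H4 Hc B1 B2 B3 B4.
  assert (Ex : forall a b, ex_RInt w a b).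
  { intros a b. apply (ex_RInt_continuous (V:=R_CompleteNormedModule)). intros; apply Hc. }
  rewrite <- (RInt_Chasles w 0 a1 1) by auto.
  rewrite <- (RInt_Chasles w a1 a2 1) by auto.
  rewrite <- (RInt_Chasles w a2 a3 1) by auto.
  unfold plus; simpl.
  pose proof (RInt_le_const w 0 a1 b1 H1 (fun x _ => Hc x) B1).
  pose proof (RInt_le_const w a1 a2 b2 H2 (fun x _ => Hc x) B2).
  pose proof (RInt_le_const w a2 a3 b3 H3 (fun x _ => Hc x) B3).
  pose proof (RInt_le_const w a3 1 b4 H4 (fun x _ => Hc x) B4).
  lra.
Qed.

Lemma sig_abs s y : (s = 1 \/ s = -1) -> Rabs (s * y) = Rabs y.
Proof. intros [->| ->]. rewrite Rmult_1_l; auto. rewrite Rabs_mult, Rabs_left by lra. ring. Qed.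

Theorem lemma5p4 (G : R -> R) (p1 p2 K1 K2 l : R) (f : R -> R) :
  is_C2 G -> coercive G -> p1 < p2 ->
  D1 G p1 < 0 -> 0 < D1 G p2 ->
  is_max_on (fun p => Rabs (D1 G p)) p1 p2 K1 ->
  is_max_on (fun p => Rabs (D2 G p)) p1 p2 K2 ->
  (* assumptions on f *)
  periodic1 f -> is_C1 f -> lipschitz (Derive f) ->
  (forall x, p1 <= f x <= p2) ->
  (forall x, 0 <= x <= Lconst G p1 p2 - l -> f x = p1) ->
  (forall x, Lconst G p1 p2 <= x <= 1 - l -> f x = p2) ->
  RInt (fun x => D1 G (f x)) 0 1 = 0 ->
  (* assumptions of the lemma *)
  D2 G p1 < 0 -> 0 <= D2 G p2 ->
  D2 G p1 * D1 G p2 * exp (- K1) < D2 G p2 * D1 G p1 * exp K1 ->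
  0 < l < Rmin (Lconst G p1 p2) (1 - Lconst G p1 p2) ->
  (Lconst G p1 p2 - l) * D2 G p1 * exp (- K1)
    + ((1 - Lconst G p1 p2 - l) * D2 G p2 + 2 * l * K2) * exp K1 < 0 ->
  exists c0 : R, 0 < c0 /\
    forall c : R, 0 < c < c0 ->
      (forall g, cell_sol G (Vpot G f) (RInt f 0 1 + c) g -> I1 G g < 0) /\
      (forall g, cell_sol G (Vpot G f) (RInt f 0 1 - c) g -> 0 < I1 G g).
Proof.
  intros HG2 [Hcp Hcm] Hp12 HD1p1 HD1p2 [HK1a HK1b] [HK2a HK2b] Hfper [Hfd Hfc] _ Hfr HfA HfB HIf
    HD2p1 HD2p2 _ Hl HPsi.
  unfold D1, D2 in *.
  set (L := Lconst G p1 p2) in *.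
  destruct HG2 as [HGd [HG1d HG2c]].
  assert (dG : forall x, is_derive G x (Derive G x)) by (intro; apply Derive_correct; auto).
  assert (dG1 : forall x, is_derive (Derive G) x (Derive (Derive G) x)) by (intro; apply Derive_correct; auto).
  assert (cG : forall x, continuity_pt G x) by (intro x; apply (cpt_of_derive _ x _ (dG x))).
  assert (cG1 : forall x, continuity_pt (Derive G) x) by (intro x; apply (cpt_of_derive _ x _ (dG1 x))).
  assert (cG2 : forall x, continuity_pt (Derive (Derive G)) x) by (intro x; apply continuity_pt_filterlim, HG2c).
  assert (HK0 : 0 <= K2) by (destruct HK2b as [p [_ <-]]; apply Rabs_pos).
  assert (HK10 : 0 <= K1) by (destruct HK1b as [p [_ <-]]; apply Rabs_pos).
  assert (HlL : l < L /\ l < 1 - L).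
  { destruct Hl as [_ Hl]. split. apply Rlt_le_trans with (1 := Hl), Rmin_l. apply Rlt_le_trans with (1 := Hl), Rmin_r. }
  destruct (lip_compact G dG cG1 (p1 - 1) (p2 + 1)) as [M1 [HM1 HM1L]].
  destruct (continuity_ab_maj G p1 p2) as [xg [Hxg _]]. lra. intros; auto.
  set (Gm := G xg) in *.
  assert (HP : exists P, forall x, P < x -> M1 + Gm < G x).
  { specialize (Hcp (fun y => M1 + Gm < y)). destruct Hcp as [P HP0]. exists (M1 + Gm). intros; auto.
    exists P. exact HP0. }
  assert (HPm : exists P, forall x, x < P -> M1 + Gm < G x).
  { specialize (Hcm (fun y => M1 + Gm < y)). destruct Hcm as [P HP0]. exists (M1 + Gm). intros; auto.
    exists P. exact HP0. }
  destruct HP as [P HP]. destruct HPm as [Pm HPm].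
  set (R0 := Rmax 1 (Rmax (P - p1) (p2 - Pm))).
  assert (HR0 : 1 <= R0 /\ P - p1 <= R0 /\ p2 - Pm <= R0).
  { unfold R0. split. apply Rmax_l. split; eapply Rle_trans; [| apply Rmax_r | |apply Rmax_r]. apply Rmax_l. apply Rmax_r. }
  destruct (lip_compact G dG cG1 (p1 - R0) (p2 + R0)) as [M [HM HML]].
  destruct (lip_compact (Derive G) dG1 cG2 (p1 - R0) (p2 + R0)) as [M2 [HM2 HM2L]].
  set (Psi := fun t => (L - l) * (Derive (Derive G) p1 + t) * exp (- (K1 + t))
     + ((1 - L - l) * (Derive (Derive G) p2 + t) + 2 * l * (K2 + t)) * exp (K1 + t)).
  assert (Ht : exists t, 0 < t /\ t < - Derive (Derive G) p1 /\ Psi t < 0).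
  { assert (Hc : continuity_pt Psi 0) by (unfold Psi; reg).
    assert (HP0 : Psi 0 < 0).
    { unfold Psi. rewrite !Rplus_0_r. lra. }
    destruct (cpt_eps Psi 0 Hc (- Psi 0)) as [d [Hd Hd']]. lra.
    exists (Rmin (d/2) (- Derive (Derive G) p1 / 2)).
    assert (0 < Rmin (d/2) (- Derive (Derive G) p1 / 2)) by (apply Rmin_glb_lt; lra).
    assert (Rmin (d/2) (- Derive (Derive G) p1 / 2) <= d/2) by apply Rmin_l.
    assert (Rmin (d/2) (- Derive (Derive G) p1 / 2) <= - Derive (Derive G) p1 / 2) by apply Rmin_r.
    split. auto. split. lra.
    assert (Rabs (Rmin (d / 2) (- Derive (Derive G) p1 / 2) - 0) < d) by (rewrite Rminus_0_r, Rabs_right; lra).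
    specialize (Hd' _ H2). apply Rabs_def2 in Hd'. lra. }
  destruct Ht as [t [Ht0 [Ht1 HPsit]]].
  destruct (cpt_eps _ p1 (cG2 p1) t Ht0) as [g1 [Hg1 Hg1']].
  destruct (cpt_eps _ p2 (cG2 p2) t Ht0) as [g2 [Hg2 Hg2']].
  set (gam := Rmin g1 g2).
  assert (Hgam : 0 < gam /\ gam <= g1 /\ gam <= g2).
  { unfold gam. split. apply Rmin_glb_lt; auto. split. apply Rmin_l. apply Rmin_r. }
  assert (HE2M : 1 <= exp (2 * M)).
  { rewrite <- exp_0. apply exp_le. lra. }
  set (c0 := Rmin 1 (Rmin gam (t / (M2 + 1))) / exp (2 * M)).
  assert (Hm1 : 0 < Rmin 1 (Rmin gam (t / (M2 + 1)))).
  { apply Rmin_glb_lt. lra. apply Rmin_glb_lt. lra. apply Rdiv_lt_0_compat; lra. }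
  assert (Hc0 : 0 < c0) by (unfold c0; apply Rdiv_lt_0_compat; lra).
  assert (core : forall s, (s = 1 \/ s = -1) -> forall c, 0 < c < c0 -> forall g,
     cell_sol G (Vpot G f) (RInt f 0 1 + s * c) g -> s * I1 G g < 0).
  2:{ exists c0. split. auto. intros c Hc. split.
      - intros g Hg. rewrite <- (Rmult_1_r c) in Hg. rewrite <- (Rmult_comm 1) in Hg.
        pose proof (core 1 (or_introl eq_refl) c Hc g Hg). lra.
      - intros g Hg. replace (RInt f 0 1 - c) with (RInt f 0 1 + (-1) * c) in Hg by ring.
        pose proof (core (-1) (or_intror eq_refl) c Hc g Hg). lra. }
  intros s Hs c Hc g [Hgper [[Hgd Hgc] [Hgint [H HH]]]].
  assert (Hs2 : s * s = 1) by (destruct Hs as [-> | ->]; ring).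
  assert (Hs0 : s <> 0) by (destruct Hs as [-> | ->]; lra).
  assert (dg : forall x, is_derive g x (Derive g x)) by (intro; apply Derive_correct; auto).
  assert (df : forall x, is_derive f x (Derive f x)) by (intro; apply Derive_correct; auto).
  assert (Hode : forall x, Derive g x - Derive f x = H - (G (g x) - G (f x))).
  { intro x. specialize (HH x). unfold Vpot in HH. lra. }
  set (e := fun x => s * (g x - f x)).
  set (q := fun x => s * (G (g x) - G (f x))).
  set (Hc' := s * H).
  assert (de : forall x, is_derive e x (Hc' - q x)).
  { intro x. unfold e, q, Hc'. auto_derive.
    - repeat split. exists (Derive g x); auto. exists (Derive f x); auto.
    - replace (Derive (fun x0 => g x0) x) with (Derive g x) by reflexivity.
      replace (Derive (fun x0 => f x0) x) with (Derive f x) by reflexivity.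
      specialize (Hode x). nra. }
  assert (eper : periodic1 e) by (intro x; unfold e; rewrite Hgper, Hfper; auto).
  assert (cf : forall x, continuous f x) by (intro x; apply (cont_of_derive f x _ (df x))).
  assert (cg : forall x, continuous g x) by (intro x; apply (cont_of_derive g x _ (dg x))).
  assert (exf : ex_RInt f 0 1) by (apply (ex_RInt_continuous (V:=R_CompleteNormedModule)); intros; auto).
  assert (exg : ex_RInt g 0 1) by (apply (ex_RInt_continuous (V:=R_CompleteNormedModule)); intros; auto).
  assert (eint : RInt e 0 1 = c).
  { assert (is_RInt e 0 1 (s * (RInt g 0 1 - RInt f 0 1))).
    { apply (is_RInt_scal (fun x => g x - f x)). apply (is_RInt_minus g f).
      apply (RInt_correct (V:=R_CompleteNormedModule)); auto. apply (RInt_correct (V:=R_CompleteNormedModule)); auto. }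
    rewrite (is_RInt_unique _ _ _ _ H0), Hgint. replace (RInt f 0 1 + s * c - RInt f 0 1) with (s * c) by ring.
    change (s * (s * c) = c). transitivity ((s * s) * c). ring. rewrite Hs2. ring. }
  assert (Habsq : forall x, Rabs (q x) = Rabs (G (g x) - G (f x))) by (intro; unfold q; apply sig_abs; auto).
  assert (Habse : forall x, Rabs (e x) = Rabs (g x - f x)) by (intro; unfold e; apply sig_abs; auto).
  assert (cgp : forall x, continuity_pt g x) by (intro x; apply (cpt_of_derive g x _ (dg x))).
  assert (Hloc : forall a b, exists B, forall x, a <= x <= b -> Rabs (q x) <= B * Rabs (e x)).
  { intros a b. destruct (Rle_dec a b) as [Hab|Hab].
    - destruct (continuity_ab_maj g a b Hab) as [xa [Hxa _]]. intros; auto.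
      destruct (continuity_ab_min g a b Hab) as [xb [Hxb _]]. intros; auto.
      destruct (lip_compact G dG cG1 (Rmin p1 (g xb)) (Rmax p2 (g xa))) as [B [HB HBL]].
      exists B. intros x Hx. rewrite Habsq, Habse. rewrite <- (Rabs_Ropp (g x - f x)).
      replace (- (g x - f x)) with (f x - g x) by ring. rewrite <- (Rabs_Ropp (G (g x) - G (f x))).
      replace (- (G (g x) - G (f x))) with (G (f x) - G (g x)) by ring.
      specialize (Hfr x). specialize (Hxa x Hx). specialize (Hxb x Hx).
      apply HBL.
      + split. apply Rle_trans with (g xb). apply Rmin_r. auto. apply Rle_trans with (g xa). auto. apply Rmax_r.
      + split. apply Rle_trans with p1. apply Rmin_l. lra. apply Rle_trans with p2. lra. apply Rmax_l.
    - exists 0. intros; lra. }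
  assert (epos : forall x, 0 < e x).
  { apply (positivity e q Hc' eper de Hloc). rewrite eint; lra. }
  assert (Hge : forall x, g x = f x + s * e x).
  { intro x. unfold e. transitivity (f x + (s * s) * (g x - f x)). rewrite Hs2; ring. ring. }
  assert (Hgfe : forall x, Rabs (g x - f x) = e x).
  { intro x. rewrite <- Habse. apply Rabs_right. apply Rle_ge, Rlt_le, epos. }
  assert (cep : forall x, continuity_pt e x) by (intro y; apply (cpt_of_derive e y _ (de y))).
  destruct (continuity_ab_min e 0 1) as [xm [Hm Hm01]]. lra. intros; auto.
  assert (Hmg : forall y, e xm <= e y).
  { intro y. destruct (per_red e eper 0 y) as [y' [Hy' E]]. rewrite E. apply Hm. lra. }
  assert (HHm : Hc' - q xm = 0) by (apply (deriv_zero_min e xm); auto).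
  destruct (continuity_ab_maj e 0 1) as [xM [HMx HM01]]. lra. intros; auto.
  assert (HMg : forall y, e y <= e xM).
  { intro y. destruct (per_red e eper 0 y) as [y' [Hy' E]]. rewrite E. apply HMx. lra. }
  assert (HHM : Hc' - q xM = 0) by (apply (deriv_zero_max e xM); auto).
  assert (Hmc : e xm * (1 - 0) <= RInt e 0 1).
  { apply RInt_ge_const. lra. intros y _. apply (cont_of_derive e y _ (de y)). intros; auto. }
  rewrite eint in Hmc.
  assert (Hc1 : c < 1).
  { destruct Hc as [_ Hc]. apply Rlt_le_trans with (1 := Hc). unfold c0.
    apply Rle_trans with (Rmin 1 (Rmin gam (t / (M2 + 1)))). 
    apply Rmult_le_reg_r with (exp (2 * M)). apply exp_pos. unfold Rdiv.
    rewrite Rmult_assoc, Rinv_l, Rmult_1_r. nra. apply Rgt_not_eq, exp_pos. apply Rmin_l. }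
  assert (HHb : Rabs Hc' <= M1).
  { replace Hc' with (q xm) by lra. rewrite Habsq.
    specialize (Hfr xm). pose proof (Hgfe xm). pose proof (epos xm). 
    assert (Hgx : Rabs (g xm - f xm) <= 1) by lra. apply Rabs_le_between in Hgx.
    apply Rle_trans with (M1 * Rabs (g xm - f xm)). apply HM1L; lra.
    rewrite H0. nra. }
  assert (HeR0 : e xM <= R0).
  { assert (HeM : e xM = s * (g xM - f xM)) by reflexivity.
    assert (HqM : q xM = s * (G (g xM) - G (f xM))) by reflexivity.
    assert (HGf : G (f xM) <= Gm) by (apply Hxg; apply Hfr).
    pose proof (Hfr xM). apply Rabs_le_between in HHb.
    destruct Hs as [Hs1|Hs1]; rewrite Hs1 in HeM, HqM.
    - assert (g xM <= P).
      { destruct (Rle_dec (g xM) P) as [|Hn]; auto. exfalso.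
        specialize (HP (g xM) ltac:(lra)). lra. }
      lra.
    - assert (Pm <= g xM).
      { destruct (Rle_dec Pm (g xM)) as [|Hn]; auto. exfalso.
        specialize (HPm (g xM) ltac:(lra)). lra. }
      lra. }
  assert (Hrg : forall x, p1 - R0 <= g x <= p2 + R0 /\ p1 - R0 <= f x <= p2 + R0).
  { intro x. pose proof (Hgfe x). pose proof (HMg x). pose proof (Hfr x).
    assert (Rabs (g x - f x) <= R0) by lra. apply Rabs_le_between in H3. lra. }
  assert (HqM : forall x, Rabs (q x) <= M * e x).
  { intro x. rewrite Habsq, <- Hgfe. destruct (Hrg x). apply HML; auto. }
  set (Sb := exp (2 * M) * c).
  assert (Hharn : forall x, 0 <= x <= 1 -> e x <= Sb).
  { intros x Hx. unfold Sb. rewrite <- eint. apply (harnack e q Hc' M); auto. }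
  assert (HSb : Sb < gam /\ M2 * Sb <= t).
  { assert (Sb < Rmin 1 (Rmin gam (t / (M2 + 1)))).
    { unfold Sb. destruct Hc as [_ Hc]. unfold c0 in Hc. 
      apply Rmult_lt_compat_l with (r := exp (2 * M)) in Hc. 2: apply exp_pos.
      replace (exp (2 * M) * (Rmin 1 (Rmin gam (t / (M2 + 1))) / exp (2 * M))) with 
        (Rmin 1 (Rmin gam (t / (M2 + 1)))) in Hc. auto. field. apply Rgt_not_eq, exp_pos. }
    assert (Rmin 1 (Rmin gam (t / (M2 + 1))) <= Rmin gam (t / (M2 + 1))) by apply Rmin_r.
    assert (Rmin gam (t / (M2 + 1)) <= gam) by apply Rmin_l.
    assert (Rmin gam (t / (M2 + 1)) <= t / (M2 + 1)) by apply Rmin_r.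
    split. lra.
    assert (0 <= Sb) by (unfold Sb; pose proof (exp_pos (2 * M)); nra).
    assert (Sb * (M2 + 1) <= t).
    { apply Rle_trans with (t / (M2 + 1) * (M2 + 1)). apply Rmult_le_compat_r; lra.
      right. field. lra. }
    nra. }
  set (Fd := fun x => Derive G (f x)).
  set (F := fun x => RInt Fd 0 x).
  assert (cFd : forall x, continuous Fd x).
  { intro x. unfold Fd. apply (continuous_comp f (Derive G)). auto.
    apply (cont_of_derive _ _ _ (dG1 (f x))). }
  assert (exFd : forall a b, ex_RInt Fd a b).
  { intros a b. apply (ex_RInt_continuous (V:=R_CompleteNormedModule)). intros; auto. }
  assert (dF : forall x, is_derive F x (Fd x)).
  { intro x. apply (is_derive_RInt (V:=R_CompleteNormedModule) Fd F 0 x).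
    apply filter_forall. intro b. unfold F. apply (RInt_correct (V:=R_CompleteNormedModule)). auto.
    auto. }
  assert (F0 : F 0 = 0) by (unfold F; apply (RInt_point (V:=R_CompleteNormedModule))).
  assert (F1 : F 1 = 0) by (unfold F, Fd; exact HIf).
  assert (Hdelta : forall x, 0 <= x <= 1 -> Rabs (q x / e x - Fd x) <= M2 * Sb).
  { intros x Hx. set (u := g x - f x).
    set (T := G (g x) - G (f x) - Derive G (f x) * u).
    assert (HT : Rabs T <= M2 * (u * u)).
    { unfold T, u. destruct (Hrg x). apply (taylor1 G (p1 - R0) (p2 + R0) M2 HM2 dG); auto. }
    assert (Hu : Rabs u = e x) by apply Hgfe.
    assert (Hu0 : u <> 0) by (intro Hu0; rewrite Hu0, Rabs_R0 in Hu; pose proof (epos x); lra).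
    assert (E : q x / e x - Fd x = T / u).
    { unfold q, e, T, Fd. fold u. field. split; auto. }
    rewrite E.
    assert (Hu2 : u * u = Rabs u * Rabs u) by (rewrite <- Rabs_mult; symmetry; apply Rabs_right; apply Rle_ge, Rle_0_sqr).
    assert (HTu : Rabs (T / u) * Rabs u = Rabs T).
    { rewrite <- Rabs_mult. f_equal. field. auto. }
    assert (Rabs (T / u) <= M2 * Rabs u).
    { apply Rmult_le_reg_r with (Rabs u). rewrite Hu; apply epos. rewrite HTu. nra. }
    pose proof (Hharn x Hx). rewrite Hu in H0. nra. }
  assert (Hlog : forall x, 0 <= x <= 1 -> Rabs (ln (e x) - ln (e 0)) <= K1 + M2 * Sb).
  { apply (log_est e q F Fd Hc'); auto.
    - replace 1 with (0 + 1) by ring. apply eper.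
    - intros x Hx. unfold Fd. apply HK1a. apply Hfr. }
  set (e0 := e 0).
  assert (He0 : 0 < e0) by apply epos.
  assert (Hebd : forall x, 0 <= x <= 1 -> e0 * exp (- (K1 + t)) <= e x <= e0 * exp (K1 + t)).
  { intros x Hx. specialize (Hlog x Hx). apply Rabs_le_between in Hlog.
    pose proof (epos x). destruct HSb as [_ HSb2]. split.
    - rewrite <- (exp_ln (e x)) by auto. unfold e0. rewrite <- (exp_ln (e 0)) at 1 by auto.
      rewrite <- exp_plus. apply exp_le. lra.
    - rewrite <- (exp_ln (e x)) by auto. unfold e0. rewrite <- (exp_ln (e 0)) at 1 by auto.
      rewrite <- exp_plus. apply exp_le. lra. }
  set (Dg := fun x => Derive G (g x)).
  set (w := fun x => s * (Dg x - Fd x)).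
  assert (cDg : forall x, continuous Dg x).
  { intro x. unfold Dg. apply (continuous_comp g (Derive G)). auto.
    apply (cont_of_derive _ _ _ (dG1 (g x))). }
  assert (cw : forall x, continuous w x).
  { intro x. unfold w. apply (continuous_scal_r s (fun x => Dg x - Fd x)).
    apply (continuous_minus Dg Fd); auto. }
  assert (HI : s * I1 G g = RInt w 0 1).
  { assert (is_RInt w 0 1 (s * (RInt Dg 0 1 - RInt Fd 0 1))).
    { apply (is_RInt_scal (fun x => Dg x - Fd x)). apply (is_RInt_minus Dg Fd).
      apply (RInt_correct (V:=R_CompleteNormedModule)). apply (ex_RInt_continuous (V:=R_CompleteNormedModule)). intros; auto.
      apply (RInt_correct (V:=R_CompleteNormedModule)); auto. }
    rewrite (is_RInt_unique _ _ _ _ H0).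
    change (s * I1 G g = s * (RInt Dg 0 1 - RInt Fd 0 1)).
    unfold I1, D1. fold Dg. unfold Fd. rewrite HIf. ring. }
  assert (Hpt : forall x, exists xi, Rabs (xi - f x) <= e x /\ w x = Derive (Derive G) xi * e x).
  { intro x. destruct (MVT_gen (Derive G) (f x) (g x) (Derive (Derive G))) as [xi [Hxi E]].
    - intros; apply dG1.
    - intros; apply cG1.
    - exists xi. split.
      + rewrite <- Hgfe. destruct (Rle_dec (f x) (g x)).
        * rewrite Rmin_left, Rmax_right in Hxi by lra. rewrite !Rabs_right by lra. lra.
        * rewrite Rmin_right, Rmax_left in Hxi by lra. rewrite Rabs_left1 by lra. rewrite Rabs_left1 by lra. lra.
      + unfold w, Dg, Fd, e. rewrite E. ring. }
  assert (Hb1 : forall xi, Rabs (xi - p1) < gam -> Derive (Derive G) xi < Derive (Derive G) p1 + t).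
  { intros xi Hxi. assert (Rabs (xi - p1) < g1) by lra. specialize (Hg1' xi H0). apply Rabs_def2 in Hg1'. lra. }
  assert (Hb2 : forall xi, Rabs (xi - p2) < gam -> Derive (Derive G) xi < Derive (Derive G) p2 + t).
  { intros xi Hxi. assert (Rabs (xi - p2) < g2) by lra. specialize (Hg2' xi H0). apply Rabs_def2 in Hg2'. lra. }
  assert (HK2p1 : Derive (Derive G) p1 <= K2).
  { assert (Rabs (Derive (Derive G) p1) <= K2) by (apply HK2a; lra). apply Rabs_le_between in H0. lra. }
  assert (HK2p2 : Derive (Derive G) p2 <= K2).
  { assert (Rabs (Derive (Derive G) p2) <= K2) by (apply HK2a; lra). apply Rabs_le_between in H0. lra. }
  assert (Hb3 : forall x xi, Rabs (xi - f x) < gam -> Derive (Derive G) xi <= K2 + t).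
  { intros x xi Hxi. pose proof (Hfr x). apply Rabs_def2 in Hxi.
    destruct (Rlt_le_dec xi p1).
    - assert (Rabs (xi - p1) < gam) by (rewrite Rabs_left by lra; lra). specialize (Hb1 xi H1). lra.
    - destruct (Rle_lt_dec xi p2).
      + assert (Rabs (Derive (Derive G) xi) <= K2) by (apply HK2a; lra). apply Rabs_le_between in H1. lra.
      + assert (Rabs (xi - p2) < gam) by (rewrite Rabs_right by lra; lra). specialize (Hb2 xi H1). lra. }
  destruct HSb as [HSb1 HSb2].
  rewrite HI.
  apply Rle_lt_trans with (e0 * Psi t).
  2:{ nra. }
  set (Ep := exp (K1 + t)). set (Em := exp (- (K1 + t))).
  assert (HEp : 0 < Ep) by apply exp_pos. assert (HEm : 0 < Em) by apply exp_pos.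
  replace (e0 * Psi t) with
    (((Derive (Derive G) p1 + t) * e0 * Em) * (L - l) + ((K2 + t) * e0 * Ep) * (L - (L - l))
     + ((Derive (Derive G) p2 + t) * e0 * Ep) * ((1 - l) - L) + ((K2 + t) * e0 * Ep) * (1 - (1 - l)))
    by (unfold Psi; fold Ep Em; ring).
  apply (int4 w (L - l) L (1 - l)); try lra; auto.
  - intros x Hx. destruct (Hpt x) as [xi [Hxi Ew]]. rewrite Ew.
    assert (Hx01 : 0 <= x <= 1) by lra.
    pose proof (Hebd x Hx01) as Hb. pose proof (Hharn x Hx01). rewrite (HfA x Hx) in Hxi.
    assert (Rabs (xi - p1) < gam) by lra. specialize (Hb1 xi H1). fold Ep Em in Hb.
    pose proof (epos x). nra.
  - intros x Hx. destruct (Hpt x) as [xi [Hxi Ew]]. rewrite Ew.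
    assert (Hx01 : 0 <= x <= 1) by lra.
    pose proof (Hebd x Hx01) as Hb. pose proof (Hharn x Hx01). fold Ep Em in Hb.
    assert (Rabs (xi - f x) < gam) by lra. specialize (Hb3 x xi H1).
    pose proof (epos x). nra.
  - intros x Hx. destruct (Hpt x) as [xi [Hxi Ew]]. rewrite Ew.
    assert (Hx01 : 0 <= x <= 1) by lra.
    pose proof (Hebd x Hx01) as Hb. pose proof (Hharn x Hx01). rewrite (HfB x Hx) in Hxi.
    assert (Rabs (xi - p2) < gam) by lra. specialize (Hb2 xi H1). fold Ep Em in Hb.
    pose proof (epos x). nra.
  - intros x Hx. destruct (Hpt x) as [xi [Hxi Ew]]. rewrite Ew.
    assert (Hx01 : 0 <= x <= 1) by lra.
    pose proof (Hebd x Hx01) as Hb. pose proof (Hharn x Hx01). fold Ep Em in Hb.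
    assert (Rabs (xi - f x) < gam) by lra. specialize (Hb3 x xi H1).
    pose proof (epos x). nra.
Qed.
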